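(* In the social learning model, suppose $G_-$ and $G_+$ are continuous and the left tail of $G_-$ is convex and differentiable. Then for every $L\in\mathbb{R}$ there exists $m_L>0$ such that for every $t\ge1$ and every $x\ge L$ with $\mathbb{P}_+(\ell_t=x)>0$, $$\mathbb{P}_+(E_t\mid \ell_t=x)\ge m_L.$$
   Context: Social learning model. A state $\theta\in\{-1,+1\}$ is drawn with $\mathbb{P}(\theta=+1)=\mathbb{P}(\theta=-1)=1/2$. Agents $t=1,2,\dots$ receive private signals $s_t\in\mathbb{R}$ that are i.i.d. conditionally on $\theta$, with CDF $F_+$ if $\theta=+1$ and $F_-$ if $\theta=-1$; $F_+$ and $F_-$ are mutually absolutely continuous. Let $L_t=\log\frac{\mathbb{P}(\theta=+1\mid s_t)}{\mathbb{P}(\theta=-1\mid s_t)}$ be the private log-likelihood ratio, and let $G_+$, $G_-$ denote the CDFs of $L_t$ conditional on $\theta=+1$, $\theta=-1$ respectively. Signals are assumed unbounded: for every $M\in\mathbb{R}$, $\mathbb{P}(L_t>M)>0$ and $\mathbb{P}(L_t<-M)>0$. Agent $t$ observes $a_1,\dots,a_{t-1}$ and her own signal and chooses $a_t\in\{-1,+1\}$ (utility $1$ if $a_t=\theta$, else $0$). The public belief is $\mu_t=\mathbb{P}(\theta=+1\mid a_1,\dots,a_{t-1})$ and $\ell_t=\log\frac{\mu_t}{1-\mu_t}$ (so $\ell_1=0$). In equilibrium $a_t=+1$ iff $\ell_t+L_t>0$, and otherwise $a_t=-1$. Consequently $\ell_{t+1}=\ell_t+D_+(\ell_t)$ if $a_t=+1$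 and $\ell_{t+1}=\ell_t+D_-(\ell_t)$ if $a_t=-1$, where $D_+(x)=\log\frac{1-G_+(-x)}{1-G_-(-x)}$ and $D_-(x)=\log\frac{G_+(-x)}{G_-(-x)}$. We write $\mathbb{P}_+(\cdot)=\mathbb{P}(\cdot\mid\theta=+1)$ and $\mathbb{E}_+$ for the corresponding expectation. ''The left tail of $G_-$ is convex and differentiable'' means: there exists $x_0\in\mathbb{R}$ such that the restriction of $G_-$ to $(-\infty,x_0)$ is convex and differentiable. $E_t$ denotes the event that $a_\tau=+1$ for all $\tau\ge t$. *)

(* Defs.v *)
From Stdlib Require Import Reals List.
Open Scope R_scope.

Definition is_cdf (G : R -> R) : Prop :=
  (forall x y, x <= y -> G x <= G y) /\
  (forall x eps, 0 < eps -> exists d, 0 < d /\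
      forall y, x <= y < x + d -> Rabs (G y - G x) < eps) /\
  (forall eps, 0 < eps -> exists M, forall x, x <= - M -> G x < eps) /\
  (forall eps, 0 < eps -> exists M, forall x, M <= x -> 1 - eps < G x).

(* (Gp, Gm) are the conditional CDFs of a log-likelihood ratio L, i.e.
   dGp(l) = e^l dGm(l).  Stated measure-freely on half-open intervals (a,b]:
   the Gp-mass of (a,b] lies between e^a and e^b times its Gm-mass. *)
Definition llr_pair (Gp Gm : R -> R) : Prop :=
  is_cdf Gp /\ is_cdf Gm /\
  forall a b, a < b ->
    exp a * (Gm b - Gm a) <= Gp b - Gp a <= exp b * (Gm b - Gm a).

(* Unbounded signals: for every M, P(L > M) > 0 and P(L < -M) > 0, with
   P the unconditional law (prior 1/2 - 1/2). *)
Definition unbounded_signals (Gp Gm : R -> R) : Prop :=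
  forall M, 0 < (Gp M + Gm M) / 2 < 1.

Definition convex_on_lt (G : R -> R) (x0 : R) : Prop :=
  forall x y lam, x < x0 -> y < x0 -> 0 <= lam <= 1 ->
    G (lam * x + (1 - lam) * y) <= lam * G x + (1 - lam) * G y.

Definition left_tail_convex_diff (G : R -> R) : Prop :=
  exists x0, convex_on_lt G x0 /\
    forall x, x < x0 -> exists l, derivable_pt_lim G x l.

Definition Dplus (Gp Gm : R -> R) (x : R) : R :=
  ln ((1 - Gp (- x)) / (1 - Gm (- x))).
Definition Dminus (Gp Gm : R -> R) (x : R) : R :=
  ln (Gp (- x) / Gm (- x)).

(* action true = +1, false = -1 *)
Definition step (Gp Gm : R -> R) (x : R) (a : bool) : R :=
  if a then x + Dplus Gp Gm x else x + Dminus Gp Gm x.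

(* P_+(a_t = a | l_t = x): a_t = +1 iff l_t + L_t > 0, L_t ~ Gp under theta=+1,
   independent of the past. *)
Definition act_prob_plus (Gp : R -> R) (x : R) (a : bool) : R :=
  if a then 1 - Gp (- x) else Gp (- x).

(* Running a history of actions from public llr x: returns the final public
   llr and the P_+-probability of that history. *)
Fixpoint run (Gp Gm : R -> R) (x : R) (h : list bool) : R * R :=
  match h with
  | nil => (x, 1)
  | a :: h' =>
      let r := run Gp Gm (step Gp Gm x a) h' in
      (fst r, act_prob_plus Gp x a * snd r)
  end.

Fixpoint all_hist (n : nat) : list (list bool) :=
  match n with
  | O => nil :: nil
  | S k => map (cons true) (all_hist k) ++ map (cons false) (all_hist k)
  end.

Definition sumR (l : list R) : R := fold_right Rplus 0 l.

(* P_+(l_t = x): histories a_1..a_{t-1}, with l_1 = 0. *)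
Definition P_llr (Gp Gm : R -> R) (t : nat) (x : R) : R :=
  sumR (map (fun h =>
     if Req_EM_T (fst (run Gp Gm 0 h)) x then snd (run Gp Gm 0 h) else 0)
   (all_hist (t - 1))).

(* P_+(l_t = x and a_t = ... = a_{t+n-1} = +1). *)
Definition P_llr_plus_run (Gp Gm : R -> R) (t : nat) (x : R) (n : nat) : R :=
  sumR (map (fun h =>
     if Req_EM_T (fst (run Gp Gm 0 h)) x
     then snd (run Gp Gm 0 (h ++ repeat true n)) else 0)
   (all_hist (t - 1))).

(* Main.v *)
Require Import Defs.
From Stdlib Require Import Reals List Lra.
Open Scope R_scope.

Lemma exple x y : x <= y -> exp x <= exp y.
Proof. intros H; destruct (Rle_lt_or_eq_dec _ _ H) as [h|h];
  [left; apply exp_increasing; auto | subst; lra]. Qed.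

Lemma bnd_le1 F G : is_cdf F -> is_cdf G -> (forall M, F M + G M < 2) ->
  forall z, F z <= 1.
Proof.
  intros [mF _] [_ [_ [_ hiG]]] U z.
  destruct (Rle_lt_dec (F z) 1) as [h|h]; auto.
  destruct (hiG (F z - 1)) as [M HM]; [lra|].
  set (w := Rmax z M).
  assert (F z <= F w) by (apply mF; apply Rmax_l).
  assert (1 - (F z - 1) < G w) by (apply HM; apply Rmax_r).
  specialize (U w); lra.
Qed.

Lemma bnd_ge0 F G : is_cdf F -> is_cdf G -> (forall M, 0 < F M + G M) ->
  forall z, 0 <= F z.
Proof.
  intros [mF _] [_ [_ [loG _]]] U z.
  destruct (Rle_lt_dec 0 (F z)) as [h|h]; auto.
  destruct (loG (- F z)) as [M HM]; [lra|].
  set (w := Rmin z (-M)).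
  assert (F w <= F z) by (apply mF; apply Rmin_l).
  assert (G w < - F z) by (apply HM; apply Rmin_r).
  specialize (U w); lra.
Qed.

Section S.
End S.

Lemma G01 Gp Gm : llr_pair Gp Gm -> unbounded_signals Gp Gm ->
  forall z, (0 <= Gp z <= 1) /\ (0 <= Gm z <= 1).
Proof.
  intros [cp [cm _]] U z.
  assert (U1 : forall M, Gp M + Gm M < 2) by (intro M; specialize (U M); lra).
  assert (U2 : forall M, 0 < Gp M + Gm M) by (intro M; specialize (U M); lra).
  assert (U1' : forall M, Gm M + Gp M < 2) by (intro M; specialize (U1 M); lra).
  assert (U2' : forall M, 0 < Gm M + Gp M) by (intro M; specialize (U2 M); lra).
  repeat split.
  - exact (bnd_ge0 Gp Gm cp cm U2 z).
  - exact (bnd_le1 Gp Gm cp cm U1 z).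
  - exact (bnd_ge0 Gm Gp cm cp U2' z).
  - exact (bnd_le1 Gm Gp cm cp U1' z).
Qed.

Lemma LemA Gp Gm : llr_pair Gp Gm -> unbounded_signals Gp Gm ->
  forall z, Gp z <= exp z * Gm z.
Proof.
  intros Hl U z. pose proof (G01 _ _ Hl U) as B.
  destruct Hl as [[mp [_ [lop _]]] [cm I]].
  destruct (Rle_lt_dec (Gp z) (exp z * Gm z)) as [h|h]; auto.
  destruct (lop (Gp z - exp z * Gm z)) as [M HM]; [lra|].
  set (a := Rmin (z-1) (-M)).
  assert (a < z) by (unfold a; pose proof (Rmin_l (z-1) (-M)); lra).
  assert (Gp a < Gp z - exp z * Gm z) by (apply HM; apply Rmin_r).
  destruct (I a z H) as [_ I2].
  pose proof (exp_pos z). destruct (B a) as [_ [Ga _]].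
  assert (0 <= exp z * Gm a) by (apply Rmult_le_pos; lra).
  lra.
Qed.

Lemma LemA' Gp Gm : llr_pair Gp Gm -> unbounded_signals Gp Gm ->
  forall z, exp z * (1 - Gm z) <= 1 - Gp z.
Proof.
  intros Hl U z. pose proof (G01 _ _ Hl U) as B.
  destruct Hl as [cp [[mm [_ [_ him]]] I]].
  destruct (Rle_lt_dec (exp z * (1 - Gm z)) (1 - Gp z)) as [h|h]; auto.
  pose proof (exp_pos z).
  set (d := exp z * (1 - Gm z) - (1 - Gp z)).
  destruct (him (d / exp z)) as [M HM].
  { unfold d; apply Rdiv_lt_0_compat; lra. }
  set (b := Rmax (z+1) M).
  assert (z < b) by (unfold b; pose proof (Rmax_l (z+1) M); lra).
  assert (1 - d / exp z < Gm b) by (apply HM; apply Rmax_r).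
  destruct (I z b H0) as [I1 _].
  assert (exp z * (1 - d/exp z - Gm z) < exp z * (Gm b - Gm z))
    by (apply Rmult_lt_compat_l; lra).
  assert (exp z * (1 - d/exp z - Gm z) = 1 - Gp z) by (unfold d; field; lra).
  destruct (B b) as [[_ Gb] _]. lra.
Qed.

Lemma Gm_pos Gp Gm : llr_pair Gp Gm -> unbounded_signals Gp Gm ->
  forall z, 0 < Gm z.
Proof.
  intros Hl U z. pose proof (LemA _ _ Hl U z). pose proof (G01 _ _ Hl U z).
  specialize (U z).
  destruct (Rle_lt_dec (Gm z) 0) as [h|h]; auto.
  assert (Gm z = 0) by lra. rewrite H1 in H. lra.
Qed.

Lemma Gm_lt1 Gp Gm : llr_pair Gp Gm -> unbounded_signals Gp Gm ->
  forall z, Gm z < 1.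
Proof.
  intros Hl U z. pose proof (G01 _ _ Hl U) as B.
  pose proof (U z) as Uz.
  destruct (Rle_lt_dec 1 (Gm z)) as [h|h]; auto.
  exfalso.
  destruct Hl as [[mp [_ [_ hip]]] [cm I]].
  destruct (B z) as [_ [_ g1]].
  assert (Gm z = 1) by lra.
  destruct (hip (1 - Gp z)) as [M HM]; [lra|].
  set (b := Rmax (z+1) M).
  assert (z < b) by (unfold b; pose proof (Rmax_l (z+1) M); lra).
  assert (1 - (1 - Gp z) < Gp b) by (apply HM; apply Rmax_r).
  destruct (I z b H0) as [_ I2].
  destruct (B b) as [_ [_ gb]].
  pose proof (exp_pos b).
  assert (exp b * (Gm b - Gm z) <= 0).
  { rewrite H. assert (Gm b - 1 <= 0) by lra. nra. }
  lra.
Qed.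

Lemma Gp_lt1 Gp Gm : llr_pair Gp Gm -> unbounded_signals Gp Gm ->
  forall z, Gp z < 1.
Proof.
  intros Hl U z. pose proof (LemA' _ _ Hl U z). pose proof (Gm_lt1 _ _ Hl U z).
  pose proof (exp_pos z).
  assert (0 < exp z * (1 - Gm z)) by (apply Rmult_lt_0_compat; lra). lra.
Qed.

Lemma h_left Gp Gm : llr_pair Gp Gm -> unbounded_signals Gp Gm ->
  forall z, -1 <= z <= 0 -> Gm (-1) - Gp (-1) <= Gm z - Gp z.
Proof.
  intros Hl U z Hz.
  destruct (Rle_lt_or_eq_dec _ _ (proj1 Hz)) as [h|h]; [|subst; lra].
  destruct Hl as [_ [[mm _] I]].
  destruct (I _ _ h) as [_ I2].
  assert (exp z <= 1) by (rewrite <- exp_0; apply exple; lra).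
  assert (0 <= Gm z - Gm (-1)) by (assert (Gm (-1) <= Gm z) by (apply mm; lra); lra).
  pose proof (exp_pos z).
  nra.
Qed.

Lemma h_right Gp Gm : llr_pair Gp Gm -> unbounded_signals Gp Gm ->
  forall z M, 0 <= z <= M -> Gm M - Gp M <= Gm z - Gp z.
Proof.
  intros Hl U z M Hz.
  destruct (Rle_lt_or_eq_dec _ _ (proj2 Hz)) as [h|h]; [|subst; lra].
  destruct Hl as [_ [[mm _] I]].
  destruct (I _ _ h) as [I1 _].
  assert (1 <= exp z) by (rewrite <- exp_0; apply exple; lra).
  assert (0 <= Gm M - Gm z) by (assert (Gm z <= Gm M) by (apply mm; lra); lra).
  nra.
Qed.

Lemma H_eta Gp Gm L : llr_pair Gp Gm -> unbounded_signals Gp Gm ->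
  exists eta, 0 < eta /\ forall z, z <= -L -> eta * Gm z <= Gm z - Gp z.
Proof.
  intros Hl U.
  set (Mx := Rabs L + 1).
  assert (HMx : 0 < Mx) by (unfold Mx; pose proof (Rabs_pos L); lra).
  set (d := Rmin ((1 - exp (-1)) * Gm (-1)) ((exp Mx - 1) * (1 - Gm Mx))).
  assert (He1 : exp (-1) < 1) by (rewrite <- exp_0; apply exp_increasing; lra).
  assert (HeM : 1 < exp Mx) by (rewrite <- exp_0; apply exp_increasing; lra).
  pose proof (Gm_pos _ _ Hl U (-1)). pose proof (Gm_lt1 _ _ Hl U Mx).
  assert (Hd : 0 < d).
  { unfold d; apply Rmin_glb_lt; apply Rmult_lt_0_compat; lra. }
  exists (Rmin (1 - exp (-1)) d). split.
  { apply Rmin_glb_lt; lra. }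
  intros z Hz.
  pose proof (Rmin_l (1 - exp (-1)) d). pose proof (Rmin_r (1 - exp (-1)) d).
  set (eta := Rmin (1 - exp (-1)) d) in *.
  pose proof (G01 _ _ Hl U z) as [_ [g0 g1]].
  destruct (Rle_lt_dec z (-1)) as [h1|h1].
  - pose proof (LemA _ _ Hl U z).
    assert (exp z <= exp (-1)) by (apply exple; lra).
    nra.
  - destruct (Rle_lt_dec z 0) as [h2|h2].
    + pose proof (h_left _ _ Hl U z (conj (Rlt_le _ _ h1) h2)).
      pose proof (LemA _ _ Hl U (-1)).
      assert (d <= (1 - exp (-1)) * Gm (-1)) by apply Rmin_l.
      nra.
    + assert (z <= Mx) by (unfold Mx; pose proof (Rabs_Ropp L);
         pose proof (Rle_abs (-L)); lra).
      pose proof (h_right _ _ Hl U z Mx (conj (Rlt_le _ _ h2) H3)).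
      pose proof (LemA' _ _ Hl U Mx).
      assert (d <= (exp Mx - 1) * (1 - Gm Mx)) by apply Rmin_r.
      nra.
Qed.

Lemma step_lemma Gp Gm L eta : llr_pair Gp Gm -> unbounded_signals Gp Gm ->
  0 < eta -> (forall z, z <= -L -> eta * Gm z <= Gm z - Gp z) ->
  forall x, L <= x ->
  let c := / (1 - Gp (-L)) in
  let A := c * / (1 - Gm (-L)) / eta in
  let p := Gp (-x) in let D := Dplus Gp Gm x in
  0 <= D /\ exp (- (c * p)) <= 1 - p /\ 0 <= 1 - p /\
  c * p + A * exp (- (x + D)) <= A * exp (- x).
Proof.
  intros Hl U Heta Hh x Hx c A p D.
  pose proof (G01 _ _ Hl U (-x)) as [[p0 p1] [m0 m1]].
  pose proof (Gp_lt1 _ _ Hl U (-L)). pose proof (Gm_lt1 _ _ Hl U (-L)).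
  pose proof (Gm_lt1 _ _ Hl U (-x)). pose proof (Gm_pos _ _ Hl U (-x)).
  pose proof Hl as Hl0. destruct Hl0 as [[mp _] [[mm _] _]].
  assert (pL : Gp (-x) <= Gp (-L)) by (apply mp; lra).
  assert (mL : Gm (-x) <= Gm (-L)) by (apply mm; lra).
  fold p in p0, p1, pL.
  set (m := Gm (-x)) in *.
  assert (hm : eta * m <= m - p) by (apply Hh; lra).
  assert (eD : exp D = (1 - p) / (1 - m)).
  { unfold D, Dplus. apply exp_ln. apply Rdiv_lt_0_compat; lra. }
  assert (D1 : 1 - D <= (1 - m) / (1 - p)).
  { pose proof (exp_ineq1_le (- D)). rewrite exp_Ropp, eD in H3.
    replace (/ ((1 - p) / (1 - m))) with ((1 - m) / (1 - p)) in H3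
      by (field; lra). lra. }
  assert (D2 : m - p <= D).
  { assert ((1 - m) / (1 - p) <= 1 - (m - p)).
    { apply (Rmult_le_reg_r (1 - p)); [lra|].
      unfold Rdiv; rewrite Rmult_assoc, Rinv_l by lra.
      assert (0 <= eta * m) by (apply Rmult_le_pos; lra). nra. }
    lra. }
  assert (HetaP : 0 <= m - p) by (assert (0 <= eta * m) by (apply Rmult_le_pos; lra); lra).
  assert (D0 : 0 <= D) by lra.
  assert (cpos : 0 < c) by (unfold c; apply Rinv_0_lt_compat; lra).
  assert (c1 : c * (1 - Gp (-L)) = 1) by (unfold c; field; lra).
  split; [exact D0|]. split.
  { pose proof (exp_ineq1_le (c * p)).
    rewrite exp_Ropp.
    assert (1 <= (1 + c * p) * (1 - p)) by nra.
    assert (0 < 1 + c * p) by nra.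
    apply (Rmult_le_reg_l (exp (c * p))); [apply exp_pos|].
    rewrite Rinv_r by (pose proof (exp_pos (c*p)); lra).
    nra. }
  split; [lra|].
  set (ex := exp (- x)). set (E := / (1 - Gm (-L))).
  assert (Epos : 0 < E) by (unfold E; apply Rinv_0_lt_compat; lra).
  assert (exD : exp (- (x + D)) * exp D = ex).
  { unfold ex; rewrite <- exp_plus; f_equal; ring. }
  assert (eDE : exp D <= E).
  { rewrite eD. unfold E.
    assert (/ (1 - m) <= / (1 - Gm (-L))) by (apply Rinv_le_contravar; lra).
    assert (0 < / (1 - m)) by (apply Rinv_0_lt_compat; lra).
    unfold Rdiv. nra. }
  pose proof (exp_ineq1_le D).
  pose proof (exp_pos (- (x + D))) as pxD.
  assert (expos : 0 < ex) by apply exp_pos.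
  pose proof (LemA _ _ Hl U (-x)) as LA. fold p m ex in LA.
  assert (S1 : eta * p <= ex * D) by nra.
  set (y := exp (- (x + D))) in *.
  assert (S2 : ex * D <= E * (ex - y)).
  { rewrite <- exD. set (e := exp D) in *.
    assert (0 <= y * e) by (apply Rmult_le_pos; lra).
    assert (y * e * D <= y * e * (e - 1)) by (apply Rmult_le_compat_l; lra).
    assert (0 <= y * e - y) by nra.
    assert (e * (y * e - y) <= E * (y * e - y)) by (apply Rmult_le_compat_r; lra).
    nra. }
  assert (S3 : p <= (E / eta) * (ex - y)).
  { apply (Rmult_le_reg_l eta); [lra|].
    replace (eta * (E / eta * (ex - y))) with (E * (ex - y)) by (field; lra). lra. }
  unfold A. fold E.
  replace (c * E / eta * ex) with (c * E / eta * y + c * ((E/eta) * (ex - y)))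
    by (field; lra).
  replace (c * E / eta * y) with (c * E / eta * y) by reflexivity.
  assert (c * p <= c * ((E / eta) * (ex - y))) by (apply Rmult_le_compat_l; lra).
  lra.
Qed.

Definition Q Gp Gm x n := snd (run Gp Gm x (repeat true n)).

Lemma Q_S Gp Gm x n : Q Gp Gm x (S n) = (1 - Gp (- x)) * Q Gp Gm (x + Dplus Gp Gm x) n.
Proof. reflexivity. Qed.

Lemma run_app_fst Gp Gm h h' z :
  fst (run Gp Gm z (h ++ h')) = fst (run Gp Gm (fst (run Gp Gm z h)) h').
Proof. revert z; induction h as [|a h IH]; intro z; simpl; auto. Qed.

Lemma run_app_snd Gp Gm h h' z :
  snd (run Gp Gm z (h ++ h')) =
  snd (run Gp Gm z h) * snd (run Gp Gm (fst (run Gp Gm z h)) h').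
Proof. revert z; induction h as [|a h IH]; intro z; simpl; [ring|].
  rewrite IH. ring. Qed.

Lemma sumR_mult (A : Type) (f : A -> R) q l :
  sumR (map (fun h => f h * q) l) = sumR (map f l) * q.
Proof. induction l; simpl; [ring|]. rewrite IHl. ring. Qed.

Lemma plus_run_eq Gp Gm t x n :
  P_llr_plus_run Gp Gm t x n = P_llr Gp Gm t x * Q Gp Gm x n.
Proof.
  unfold P_llr_plus_run, P_llr. rewrite <- sumR_mult. f_equal. apply map_ext.
  intro h. destruct (Req_EM_T (fst (run Gp Gm 0 h)) x) as [e|e]; [|ring].
  rewrite run_app_snd, e. reflexivity.
Qed.

Lemma Q_dec Gp Gm : llr_pair Gp Gm -> unbounded_signals Gp Gm ->
  forall n x, 0 <= Q Gp Gm x n /\ Q Gp Gm x (S n) <= Q Gp Gm x n.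
Proof.
  intros Hl U n. induction n as [|n IH]; intro x.
  - rewrite Q_S. unfold Q; simpl. destruct (G01 _ _ Hl U (-x)) as [[? ?] _]. lra.
  - rewrite (Q_S _ _ x (S n)), (Q_S _ _ x n). destruct (G01 _ _ Hl U (-x)) as [[? ?] _].
    destruct (IH (x + Dplus Gp Gm x)) as [h1 h2]. split.
    + apply Rmult_le_pos; lra.
    + apply Rmult_le_compat_l; lra.
Qed.

Lemma Q_lb Gp Gm L eta : llr_pair Gp Gm -> unbounded_signals Gp Gm ->
  0 < eta -> (forall z, z <= -L -> eta * Gm z <= Gm z - Gp z) ->
  let A := / (1 - Gp (-L)) * / (1 - Gm (-L)) / eta in
  forall n x, L <= x -> exp (- (A * exp (- x))) <= Q Gp Gm x n.
Proof.
  intros Hl U He Hh A n. induction n as [|n IH]; intros x Hx.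
  - unfold Q; simpl. rewrite <- exp_0. apply exple.
    assert (0 <= A).
    { unfold A. pose proof (Gp_lt1 _ _ Hl U (-L)). pose proof (Gm_lt1 _ _ Hl U (-L)).
      apply Rlt_le. apply Rdiv_lt_0_compat; [|lra].
      apply Rmult_lt_0_compat; apply Rinv_0_lt_compat; lra. }
    pose proof (exp_pos (-x)). nra.
  - rewrite Q_S.
    destruct (step_lemma Gp Gm L eta Hl U He Hh x Hx) as [D0 [E1 [E2 E3]]].
    fold A in E3.
    set (c := / (1 - Gp (-L))) in *.
    set (D := Dplus Gp Gm x) in *.
    assert (L <= x + D) by lra.
    specialize (IH _ H).
    apply Rle_trans with (exp (- (c * Gp (-x))) * exp (- (A * exp (- (x + D))))).
    + rewrite <- exp_plus. apply exple. lra.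
    + apply Rmult_le_compat; try (left; apply exp_pos); lra.
Qed.

Lemma cv_ge u l m : Un_cv u l -> (forall n, m <= u n) -> m <= l.
Proof.
  intros H Hm. destruct (Rle_lt_dec m l) as [h|h]; auto.
  destruct (H (m - l)) as [N HN]; [lra|].
  specialize (HN N (le_n N)). specialize (Hm N). unfold Rdist in HN.
  pose proof (Rle_abs (u N - l)). lra.
Qed.

Theorem lemma6 (Gp Gm : R -> R) :
  llr_pair Gp Gm ->
  unbounded_signals Gp Gm ->
  continuity Gp -> continuity Gm ->
  left_tail_convex_diff Gm ->
  forall L : R, exists mL : R, 0 < mL /\
    forall (t : nat) (x : R), (1 <= t)%nat -> L <= x ->
      0 < P_llr Gp Gm t x ->
      exists pE : R,
        Un_cv (fun n => P_llr_plus_run Gp Gm t x n / P_llr Gp Gm t x) pE /\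
        mL <= pE.
Proof.
  intros Hl U _ _ _ L.
  destruct (H_eta Gp Gm L Hl U) as [eta [He Hh]].
  set (A := / (1 - Gp (-L)) * / (1 - Gm (-L)) / eta).
  assert (Apos : 0 <= A).
  { unfold A. pose proof (Gp_lt1 _ _ Hl U (-L)). pose proof (Gm_lt1 _ _ Hl U (-L)).
    apply Rlt_le. apply Rdiv_lt_0_compat; [|lra].
    apply Rmult_lt_0_compat; apply Rinv_0_lt_compat; lra. }
  exists (exp (- (A * exp (- L)))). split; [apply exp_pos|].
  intros t x _ Hx HP.
  assert (Hd : Un_decreasing (Q Gp Gm x)).
  { intro n. apply (Q_dec _ _ Hl U n x). }
  assert (Hb : has_lb (Q Gp Gm x)).
  { exists 0. intros y [i ->]. unfold opp_seq.
    pose proof (proj1 (Q_dec _ _ Hl U i x)). lra. }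
  destruct (decreasing_cv _ Hd Hb) as [l Hcv].
  exists l. split.
  - intros eps Heps. destruct (Hcv eps Heps) as [N HN]. exists N.
    intros n Hn. rewrite plus_run_eq.
    replace (P_llr Gp Gm t x * Q Gp Gm x n / P_llr Gp Gm t x) with (Q Gp Gm x n)
      by (field; lra).
    apply HN; auto.
  - apply (cv_ge _ _ _ Hcv). intro n.
    apply Rle_trans with (exp (- (A * exp (- x)))).
    + apply exple. assert (exp (- x) <= exp (- L)) by (apply exple; lra). nra.
    + apply (Q_lb Gp Gm L eta Hl U He Hh n x Hx).
Qed.
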